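(* Let $w\in\mathfrak{S}_n$ be right-almost-reducible at $i$ and left-almost-reducible at $j$. Then $i\ne j$ and $s_is_j=s_js_i$.
   Context: $\mathfrak{S}_n$ has simple generators $S=\{s_1,\ldots,s_{n-1}\}$, $s_i=(i\ i{+}1)$, length $\ell$. $\supp(x)$ is the set of simple generators in a reduced word of $x$; $D_L(x)=\{s:\ell(sx)<\ell(x)\}$, $D_R(x)=\{s:\ell(xs)<\ell(x)\}$. For $J\subseteq S$, $x=x^Jx_J$ is the parabolic decomposition ($x_J\in W_J=\langle J\rangle$, $x^J$ minimal length in $xW_J$); it is a BP-decomposition if $\supp(x^J)\cap J\subseteq D_L(x_J)$. $w$ is Bruhat irreducible if $\supp(w)=S$ and $w$ is not a product $w'w''$ with $w',w''\ne e$ and disjoint supports. A Bruhat irreducible $w$ is almost reducible at $(J,i)$ if $w=w^Jw_J$ is a BP-decomposition with $\supp(w^J)\cap J=\{s_i\}$ and $s_i\notin D_L(w)\cup D_R(w)$. $w$ is right-almost-reducible at $i$ if it is Bruhat irreducible and almost reducible at $(\{s_i,\ldots,s_{n-1}\},i)$, and left-almost-reducible at $j$ if it is Bruhat irreducible and almost reducible at $(\{s_1,\ldots,s_j\},j)$. *)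

(* Defs.v *)
(* The symmetric group S_n is {perm 'I_n}; points are 0-based,
   simple generators are 1-based: s_i swaps the points i-1 and i (1 <= i <= n-1). *)
From mathcomp Require Import all_boot all_fingroup.
Set Implicit Arguments. Unset Strict Implicit. Unset Printing Implicit Defensive.
Local Open Scope group_scope.

Definition sgen (n i : nat) : {perm 'I_n} :=
  match @insub nat (fun k => k < n) _ i.-1, @insub nat (fun k => k < n) _ i with
  | Some a, Some b => tperm a b
  | _, _ => 1
  end.

Definition is_gen (n i : nat) : Prop := (0 < i)%N /\ (i < n)%N.

Definition len (n : nat) (x : {perm 'I_n}) : nat :=
  #|[set p : 'I_n * 'I_n | (p.1 < p.2)%N && (x p.2 < x p.1)%N]|.

Definition wprod (n : nat) (w : seq nat) : {perm 'I_n} :=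
  \prod_(k <- w) sgen n k.

Definition valid_word (n : nat) (w : seq nat) : Prop :=
  forall k, k \in w -> is_gen n k.

Definition reduced_word (n : nat) (x : {perm 'I_n}) (w : seq nat) : Prop :=
  valid_word n w /\ wprod n w = x /\ size w = len x.

Definition supp (n : nat) (x : {perm 'I_n}) (k : nat) : Prop :=
  exists w, reduced_word x w /\ k \in w.

Definition DL (n : nat) (x : {perm 'I_n}) (k : nat) : Prop :=
  is_gen n k /\ (len (sgen n k * x) < len x)%N.
Definition DR (n : nat) (x : {perm 'I_n}) (k : nat) : Prop :=
  is_gen n k /\ (len (x * sgen n k) < len x)%N.

Definition in_WJ (n : nat) (J : nat -> Prop) (x : {perm 'I_n}) : Prop :=
  exists w, valid_word n w /\ (forall k, k \in w -> J k) /\ wprod n w = x.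

(* x = u v is the parabolic decomposition x = x^J x_J *)
Definition parabolic_decomp (n : nat) (J : nat -> Prop) (x u v : {perm 'I_n}) : Prop :=
  x = u * v /\ in_WJ J v /\ (forall y, in_WJ J y -> (len u <= len (x * y))%N).

Definition BP_decomp (n : nat) (J : nat -> Prop) (x u v : {perm 'I_n}) : Prop :=
  parabolic_decomp J x u v /\ (forall k, supp u k -> J k -> DL v k).

Definition bruhat_irreducible (n : nat) (w : {perm 'I_n}) : Prop :=
  (forall k, is_gen n k -> supp w k) /\
  ~ (exists w1 w2 : {perm 'I_n}, w = w1 * w2 /\ w1 <> 1 /\ w2 <> 1 /\
       (forall k, supp w1 k -> supp w2 k -> False)).

(* almost reducible at (J,i) (Bruhat irreducibility imposed separately) *)
Definition almost_reducible_at (n : nat) (w : {perm 'I_n}) (J : nat -> Prop) (i : nat) : Prop :=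
  exists u v, BP_decomp J w u v /\
    (forall k, (supp u k /\ J k) <-> k = i) /\
    ~ DL w i /\ ~ DR w i.

Definition Jright (n i : nat) (k : nat) : Prop := (i <= k)%N /\ is_gen n k.
Definition Jleft (n j : nat) (k : nat) : Prop := (k <= j)%N /\ is_gen n k.

Definition right_almost_reducible (n : nat) (w : {perm 'I_n}) (i : nat) : Prop :=
  bruhat_irreducible w /\ almost_reducible_at w (Jright n i) i.
Definition left_almost_reducible (n : nat) (w : {perm 'I_n}) (j : nat) : Prop :=
  bruhat_irreducible w /\ almost_reducible_at w (Jleft n j) j.

(* Main.v *)
Require Import Defs.
From mathcomp Require Import all_boot all_fingroup.
From mathcomp Require Import zify.
Set Implicit Arguments. Unset Strict Implicit. Unset Printing Implicit Defensive.
Local Open Scope group_scope.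

Definition sv (k t : nat) : nat :=
  if t == k.-1 then k else if t == k then k.-1 else t.

Lemma sgenE n k (p : 'I_n) :
  val (sgen n k p) = if (k < n)%N then sv k (val p) else val p.
Proof.
rewrite /sgen /sv.
case: (ltnP k n) => Hk.
- have Hk1 : (k.-1 < n)%N by apply: leq_ltn_trans Hk; exact: leq_pred.
  rewrite (insubT (fun k => k < n)%N Hk1) (insubT (fun k => k < n)%N Hk) /=.
  case: tpermP => [->|->|] /=; first by rewrite eqxx.
  + by case: eqP => [E|_]; [exact: esym E | rewrite eqxx].
  + move=> H1 H2.
    have /negbTE-> : val p != k.-1 by apply/eqP => E; apply: H1; apply: val_inj.
    have /negbTE-> : val p != k by apply/eqP => E; apply: H2; apply: val_inj.
    by [].
- rewrite (@insubF _ (fun k => k < n)%N _ k); last by rewrite ltnNge Hk.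
  by case: insub => [?|]; rewrite perm1.
Qed.
Ltac eqc := repeat (case: eqVneq => ? /=); try lia.
Lemma svK k t : sv k (sv k t) = t.
Proof. rewrite /sv. case: (eqVneq t k.-1) => ? /=; case: (eqVneq t k) => ? /=; eqc. Qed.

Lemma sgenK n k : sgen n k * sgen n k = 1.
Proof.
apply/permP => p; apply: val_inj; rewrite permM perm1 !sgenE.
by case: ifP => Hk; rewrite ?Hk ?svK.
Qed.

Lemma sgenV n k : (sgen n k)^-1 = sgen n k.
Proof. by rewrite -[(sgen n k)^-1]mulg1 -(sgenK n k) mulgA mulVg mul1g. Qed.

Lemma wprod_cons n k r : wprod n (k :: r) = sgen n k * wprod n r.
Proof. by rewrite /wprod big_cons. Qed.

Lemma wprod_cat n r1 r2 : wprod n (r1 ++ r2) = wprod n r1 * wprod n r2.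
Proof. by rewrite /wprod big_cat. Qed.

Lemma wprod_rcons n r k : wprod n (rcons r k) = wprod n r * sgen n k.
Proof. by rewrite -cats1 wprod_cat /wprod big_seq1. Qed.

Lemma wprod_rev n r : wprod n (rev r) = (wprod n r)^-1.
Proof.
elim: r => [|k r IH]; first by rewrite /wprod big_nil invg1.
by rewrite rev_cons wprod_rcons IH wprod_cons invMg sgenV.
Qed.

Lemma wprod_fix_lo n r (m : nat) :
  (forall k, k \in r -> m <= k)%N -> forall p : 'I_n, (val p).+1 < m -> wprod n r p = p.
Proof.
elim: r => [|k r IH] Hr p Hp; first by rewrite /wprod big_nil perm1.
rewrite wprod_cons permM.
have -> : sgen n k p = p.
  apply: val_inj; rewrite sgenE /sv; have := Hr k (mem_head _ _).
  case: ifP => // _ Hk; case: (eqVneq (val p) k.-1) => ? /=; case: (eqVneq (val p) k) => ? /=; lia.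
by apply: IH => // k' Hk'; apply: Hr; rewrite in_cons Hk' orbT.
Qed.

Lemma wprod_fix_hi n r (m : nat) :
  (forall k, k \in r -> k <= m)%N -> forall p : 'I_n, m < val p -> wprod n r p = p.
Proof.
elim: r => [|k r IH] Hr p Hp; first by rewrite /wprod big_nil perm1.
rewrite wprod_cons permM.
have -> : sgen n k p = p.
  apply: val_inj; rewrite sgenE /sv; have := Hr k (mem_head _ _).
  case: ifP => // _ Hk; case: (eqVneq (val p) k.-1) => ? /=; case: (eqVneq (val p) k) => ? /=; lia.
by apply: IH => // k' Hk'; apply: Hr; rewrite in_cons Hk' orbT.
Qed.

Lemma perm_stable n (x : {perm 'I_n}) (P : 'I_n -> Prop) :
  (forall p, P p -> x p = p) -> forall q, ~ P q -> ~ P (x q).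
Proof.
move=> H q Nq Pxq; apply: Nq.
have E := H _ Pxq. by rewrite -(perm_inj E).
Qed.

Definition invs n (x : {perm 'I_n}) :=
  [set p : 'I_n * 'I_n | (p.1 < p.2)%N && (x p.2 < x p.1)%N].

Lemma lenE n (x : {perm 'I_n}) : len x = #|invs x|.
Proof. by []. Qed.

Lemma len_le_inv n (x : {perm 'I_n}) : (len x <= len x^-1)%N.
Proof.
rewrite !lenE.
pose f := fun p : 'I_n * 'I_n => (x p.2, x p.1).
have finj : injective f.
  move=> [p1 p2] [q1 q2] [] /perm_inj E2 /perm_inj E1 /=; by rewrite E1 E2.
rewrite -(card_imset (invs x) finj); apply: subset_leq_card.
apply/subsetP => q /imsetP [[p1 p2]]; rewrite !inE /= => /andP [H1 H2] ->.
by rewrite /f /= !permK H1 H2.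
Qed.

Lemma len_inv n (x : {perm 'I_n}) : len x^-1 = len x.
Proof.
apply/eqP; rewrite eqn_leq len_le_inv andbT.
by have := len_le_inv x^-1; rewrite invgK.
Qed.

Lemma lenM n (x : {perm 'I_n}) k (a b : 'I_n) :
  (0 < k)%N -> (k < n)%N -> val (x a) = k.-1 -> val (x b) = k ->
  (len (x * sgen n k) + (b < a)%N = len x + (a < b)%N)%N.
Proof.
move=> Hk0 Hk Ea Eb.
rewrite !lenE.
set e := if (a < b)%N then (a, b) else (b, a).
have h1 : forall p, val (x p) = k.-1 -> p = a.
  by move=> p Ep; apply: (@perm_inj _ x); apply: val_inj; rewrite Ep Ea.
have h2 : forall p, val (x p) = k -> p = b.
  by move=> p Ep; apply: (@perm_inj _ x); apply: val_inj; rewrite Ep Eb.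
have AB : invs x :\ e = invs (x * sgen n k) :\ e.
  apply/setP => [[p1 p2]]; rewrite !inE /= !permM !sgenE Hk.
  case: (eqVneq (p1, p2) e) => //= Hne.
  case: (ltnP p1 p2) => //= H12.
  have Hd : val (x p1) <> val (x p2).
    move=> E; have := perm_inj (val_inj E) => E'; rewrite E' in H12; by rewrite ltnn in H12.
  have Hab : ~ (val (x p1) = k.-1 /\ val (x p2) = k).
    case=> /h1 E1 /h2 E2; move: Hne; rewrite /e E1 E2 -E1 -E2 H12 /=; by rewrite eqxx.
  have Hba : ~ (val (x p1) = k /\ val (x p2) = k.-1).
    case=> /h2 E1 /h1 E2; move: Hne; rewrite /e; subst p1 p2.
    by rewrite ltnNge (ltnW H12) /= eqxx.
  move: Hd Hab Hba; rewrite /sv; change (\val (x p1)) with (nat_of_ord (x p1)); change (\val (x p2)) with (nat_of_ord (x p2)).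
  move: (nat_of_ord (x p1)) (nat_of_ord (x p2)) => u v Hd Hab Hba.
  case: (eqVneq u k.-1) => ? /=; case: (eqVneq u k) => ? /=;
  case: (eqVneq v k.-1) => ? /=; case: (eqVneq v k) => ? /=; lia.
rewrite (cardsD1 e (invs x)) (cardsD1 e (invs (x * sgen n k))) AB.
have Hne : a != b.
  by apply/eqP => E; move: Ea; rewrite E Eb; lia.
have Ea' : nat_of_ord (x a) = k.-1 := Ea.
have Eb' : nat_of_ord (x b) = k := Eb.
rewrite /e !inE !permM !sgenE Hk.
case: (ltngtP a b) => H /=; rewrite ?Ea ?Eb ?Ea' ?Eb' /sv ?eqxx /=.
- case: (eqVneq k k.-1) => ? /=; lia.
- case: (eqVneq k k.-1) => ? /=; lia.
- by move: Hne; rewrite (val_inj H) eqxx.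
Qed.

Lemma sgen_triv n k : ~~ ((0 < k) && (k < n))%N -> sgen n k = 1.
Proof.
move=> H; apply/permP => p; apply: val_inj; rewrite sgenE perm1.
case: ifP => // Hk; move: H; rewrite Hk andbT -eqn0Ngt => /eqP ->.
by rewrite /sv; case: eqVneq.
Qed.

Lemma len_step n (x : {perm 'I_n}) k : (len (x * sgen n k) <= (len x).+1)%N.
Proof.
case: (boolP ((0 < k) && (k < n))%N) => [/andP [Hk0 Hk]|H]; last by rewrite sgen_triv // mulg1.
have Hk1 : (k.-1 < n)%N by apply: leq_ltn_trans Hk; exact: leq_pred.
pose a := x^-1 (Ordinal Hk1); pose b := x^-1 (Ordinal Hk).
have := @lenM n x k a b Hk0 Hk; rewrite /a /b !permKV => /(_ erefl erefl); lia.
Qed.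

Lemma len_desc n (x : {perm 'I_n}) k (a b : 'I_n) :
  (0 < k)%N -> (k < n)%N -> val (x a) = k.-1 -> val (x b) = k -> (b < a)%N ->
  (len (x * sgen n k) < len x)%N.
Proof. move=> Hk0 Hk Ea Eb Hba; have := lenM Hk0 Hk Ea Eb; rewrite Hba ltnNge (ltnW Hba) /=; lia. Qed.

Lemma len_word n r : (len (wprod n r) <= size r)%N.
Proof.
elim/last_ind: r => [|r k IH]; first by rewrite /wprod big_nil lenE leqn0 cards_eq0;
  apply/eqP/setP => p; rewrite /invs !inE !perm1; case: ltngtP.
rewrite wprod_rcons size_rcons; apply: leq_trans (len_step _ _) _; by rewrite ltnS.
Qed.

Lemma len_cat n r1 r2 : (len (wprod n (r1 ++ r2)) <= len (wprod n r1) + size r2)%N.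
Proof.
elim/last_ind: r2 => [|r k IH]; first by rewrite cats0 addn0.
rewrite -rcons_cat wprod_rcons size_rcons addnS; apply: leq_trans (len_step _ _) _; by rewrite ltnS.
Qed.

Lemma red_step n (x : {perm 'I_n}) r1 k r2 :
  reduced_word x (r1 ++ k :: r2) -> ~ (len (wprod n r1 * sgen n k) < len (wprod n r1))%N.
Proof.
case=> _ [Ew Es] Hlt.
have H1 := len_cat n (rcons r1 k) r2.
rewrite cat_rcons Ew wprod_rcons in H1.
have H2 := len_word n r1.
move: Es; rewrite size_cat /= => Es; lia.
Qed.

Lemma last_split (T : eqType) (x : T) s : x \in s -> exists s1 s2, s = s1 ++ x :: s2 /\ x \notin s2.
Proof.
elim: s => [|y s IH] //; rewrite in_cons => H.
case: (boolP (x \in s)) => [/IH [s1 [s2 [E N]]]|N].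
- by exists (y :: s1), s2; rewrite E.
- move: H; rewrite (negbTE N) orbF => /eqP E; exists [::], s; by rewrite -E.
Qed.

Lemma ndl_lem n (w : {perm 'I_n}) k (p q : 'I_n) :
  ~ DL w k -> is_gen n k -> val p = k.-1 -> val q = k -> (w p < w q)%N.
Proof.
move=> ND [Hk0 Hk] Ep Eq; rewrite ltnNge leq_eqVlt; apply/negP => /orP [/eqP E|H].
- have := perm_inj (val_inj E) => Epq; move: Ep Eq; rewrite Epq => -> ; lia.
- apply: ND; split => //; rewrite -len_inv invMg sgenV -(len_inv w).
  apply: (@len_desc n w^-1 k (w p) (w q)) => //; by rewrite permK.
Qed.

Lemma min_lem n (J : nat -> Prop) (w u v : {perm 'I_n}) k :
  parabolic_decomp J w u v -> J k -> is_gen n k -> (len u <= len (u * sgen n k))%N.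
Proof.
case=> Ew [[r [Vr [Jr Er]]] Hmin] Jk Gk.
have := Hmin (v^-1 * sgen n k).
rewrite Ew mulgA mulgK; apply.
exists (rcons (rev r) k); split; [|split].
- by move=> k'; rewrite mem_rcons in_cons mem_rev => /orP [/eqP ->|/Vr].
- by move=> k'; rewrite mem_rcons in_cons mem_rev => /orP [/eqP ->|/Jr].
- by rewrite wprod_rcons wprod_rev Er.
Qed.

Lemma right_side n (w : {perm 'I_n}) i :
  almost_reducible_at w (Jright n i) i -> is_gen n i /\
  forall p q : 'I_n, val p = i.-1 -> val q = i -> (w p < w q)%N /\ (w q < i.-1)%N.
Proof.
case=> u [v [[PD HBP] [Hs [NDL _]]]].
have [[r [Rr Ir]] [_ Gi]] : supp u i /\ Jright n i i by apply/Hs.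
split => // p q Ep Eq.
have Gi' := Gi; case: Gi' => Hi0 Hin.
have Lr : forall k, k \in r -> (k <= i)%N.
  move=> k Hk; case: (leqP k i) => // Hik.
  have Gk := Rr.1 k Hk.
  have : supp u k /\ Jright n i k by split; [exists r; split | split => //; exact: ltnW].
  by move/Hs => E; rewrite E ltnn in Hik.
have Eu : wprod n r = u := Rr.2.1.
have ufix : forall p0 : 'I_n, (i < val p0)%N -> u p0 = p0.
  by move=> p0 H; rewrite -Eu; apply: wprod_fix_hi Lr _ H.
have ustab : forall p0 : 'I_n, (val p0 <= i)%N -> (val (u p0) <= i)%N.
  move=> p0 H; have := @perm_stable n u (fun p => (i < val p)%N) ufix p0.
  move=> H'; rewrite leqNgt; apply/negP; apply: H'; apply/negP; by rewrite -leqNgt.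
have PD' := PD; case: PD' => Ew [[rv [Vv [Jv Ev]]] _].
have vfix : forall p0 : 'I_n, ((val p0).+1 < i)%N -> v p0 = p0.
  move=> p0 H; rewrite -Ev; apply: (@wprod_fix_lo n rv i) => // k /Jv []//.
have Hm := min_lem PD (conj (leqnn i) Gi) Gi.
pose a := u^-1 p; pose b := u^-1 q.
have Ea : val (u a) = i.-1 by rewrite /a permKV Ep.
have Eb : val (u b) = i by rewrite /b permKV Eq.
have Hab : (a < b)%N.
  case: (ltngtP a b) => // H.
  - by have := len_desc Hi0 Hin Ea Eb H; lia.
  - by move: Ea; rewrite (val_inj H) Eb; lia.
have HB : u q != q.
  apply/eqP => Uq.
  have [r1 [r2 [Er Ni]]] := last_split Ir.
  have Lr2 : forall k, k \in r2 -> (k <= i.-1)%N.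
    move=> k Hk; have : k \in r by rewrite Er mem_cat in_cons Hk !orbT.
    move/Lr => Hki; have : k != i by apply/eqP => E; move: Ni; rewrite -E Hk.
    lia.
  have fix2 : wprod n r2 q = q by apply: (wprod_fix_hi Lr2); rewrite Eq; lia.
  set y := wprod n r1.
  have Eu' : u = y * sgen n i * wprod n r2 by rewrite -Eu Er wprod_cat wprod_cons mulgA.
  have Hz : (y * sgen n i) q = q.
    by apply: (@perm_inj _ (wprod n r2)); rewrite fix2 -permM -Eu'.
  have Yq : val (y q) = i.-1.
    move: Hz; rewrite permM => /(f_equal val); rewrite sgenE Hin Eq /sv.
    case: eqVneq => [->//|H1]; case: eqVneq => H2 H; lia.
  have Lr1 : forall k, k \in r1 -> (k <= i)%N.
    by move=> k Hk; apply: Lr; rewrite Er mem_cat Hk.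
  pose b' := y^-1 q.
  have Eb' : val (y b') = i by rewrite /b' permKV Eq.
  have Hb' : (b' < q)%N.
    rewrite ltn_neqAle; apply/andP; split.
    - apply/eqP => E; have E' : b' = q := val_inj E; move: Eb'; rewrite E' Yq; lia.
    - rewrite Eq leqNgt; apply/negP => H.
      have := wprod_fix_hi Lr1 H; rewrite -/y => E; move: Eb'; rewrite E => E2.
      move: H; rewrite E2; lia.
  apply: (@red_step n u r1 i r2); first by rewrite -Er.
  exact: (len_desc Hi0 Hin Yq Eb' Hb').
have c_le : (nat_of_ord (u q) <= i)%N by apply: ustab; rewrite Eq.
have c_ne_i : nat_of_ord (u q) != i.
  apply/eqP => E; move/eqP: HB; apply; apply: val_inj => /=; by rewrite E -Eq.
have c_ne_im1 : nat_of_ord (u q) != i.-1.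
  apply/eqP => E.
  have Eaq : a = q.
    apply: (@perm_inj _ u); apply: val_inj; by rewrite Ea -E.
  have Hb : (nat_of_ord b <= i)%N.
    rewrite leqNgt; apply/negP => H; have := ufix b H => E2.
    by move: Eb; rewrite E2 => E3; move: H; rewrite E3 ltnn.
  move: Hab; rewrite Eaq Eq => Hbi; lia.
have Wq : w q = u q by rewrite Ew permM vfix //=; lia.
split; first exact: (ndl_lem NDL Gi Ep Eq).
rewrite Wq; lia.
Qed.

Lemma left_side n (w : {perm 'I_n}) j :
  almost_reducible_at w (Jleft n j) j -> is_gen n j /\
  forall p q : 'I_n, val p = j.-1 -> val q = j -> (j < w p)%N /\ (w p < w q)%N.
Proof.
case=> u [v [[PD HBP] [Hs [NDL _]]]].
have [[r [Rr Ir]] [_ Gj]] : supp u j /\ Jleft n j j by apply/Hs.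
split => // p q Ep Eq.
have Gj' := Gj; case: Gj' => Hj0 Hjn.
have Lr : forall k, k \in r -> (j <= k)%N.
  move=> k Hk; case: (leqP j k) => // Hkj.
  have Gk := Rr.1 k Hk.
  have : supp u k /\ Jleft n j k by split; [exists r; split | split => //; exact: ltnW].
  by move/Hs => E; rewrite E ltnn in Hkj.
have Eu : wprod n r = u := Rr.2.1.
have ufix : forall p0 : 'I_n, ((val p0).+1 < j)%N -> u p0 = p0.
  by move=> p0 H; rewrite -Eu; apply: (@wprod_fix_lo n r j).
have ustab : forall p0 : 'I_n, (j.-1 <= val p0)%N -> (j.-1 <= val (u p0))%N.
  move=> p0 H; have := @perm_stable n u (fun p => ((val p).+1 < j)%N) ufix p0.
  move=> H'; case: (leqP j.-1 (val (u p0))) => // H2; exfalso; apply: H' => /=; (simpl in *; lia).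
have PD' := PD; case: PD' => Ew [[rv [Vv [Jv Ev]]] _].
have vfix : forall p0 : 'I_n, (j < val p0)%N -> v p0 = p0.
  move=> p0 H; rewrite -Ev; apply: (@wprod_fix_hi n rv j) => // k /Jv []//.
have Hm := min_lem PD (conj (leqnn j) Gj) Gj.
pose a := u^-1 p; pose b := u^-1 q.
have Ea : val (u a) = j.-1 by rewrite /a permKV Ep.
have Eb : val (u b) = j by rewrite /b permKV Eq.
have Hab : (a < b)%N.
  case: (ltngtP a b) => // H.
  - by have := len_desc Hj0 Hjn Ea Eb H; (simpl in *; lia).
  - by move: Ea; rewrite (val_inj H) Eb; (simpl in *; lia).
have HB : u p != p.
  apply/eqP => Up.
  have [r1 [r2 [Er Nj]]] := last_split Ir.
  have Lr2 : forall k, k \in r2 -> (j.+1 <= k)%N.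
    move=> k Hk; have : k \in r by rewrite Er mem_cat in_cons Hk !orbT.
    move/Lr => Hjk; have : k != j by apply/eqP => E; move: Nj; rewrite -E Hk.
    (simpl in *; lia).
  have fix2 : wprod n r2 p = p by apply: (@wprod_fix_lo n r2 j.+1) => //; rewrite Ep; (simpl in *; lia).
  set y := wprod n r1.
  have Eu' : u = y * sgen n j * wprod n r2 by rewrite -Eu Er wprod_cat wprod_cons mulgA.
  have Hz : (y * sgen n j) p = p.
    by apply: (@perm_inj _ (wprod n r2)); rewrite fix2 -permM -Eu'.
  have Yp : val (y p) = j.
    move: Hz; rewrite permM => /(f_equal val); rewrite sgenE Hjn Ep /sv.
    case: eqVneq => [H1|H1]; first (simpl in *; lia).
    case: eqVneq => H2 H; (simpl in *; lia).
  have Lr1 : forall k, k \in r1 -> (j <= k)%N.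
    by move=> k Hk; apply: Lr; rewrite Er mem_cat Hk.
  pose a' := y^-1 p.
  have Ea' : val (y a') = j.-1 by rewrite /a' permKV Ep.
  have Ha' : (p < a')%N.
    rewrite ltn_neqAle; apply/andP; split.
    - apply/eqP => E; have E' : p = a' := val_inj E; move: Ea'; rewrite -E' Yp; (simpl in *; lia).
    - rewrite Ep leqNgt; apply/negP => H.
      have H' : ((val a').+1 < j)%N by rewrite /=; (simpl in *; lia).
      have := @wprod_fix_lo n r1 j Lr1 a' H'; rewrite -/y => E; move: Ea'; rewrite E => E2.
      move: H; rewrite /= E2; (simpl in *; lia).
  apply: (@red_step n u r1 j r2); first by rewrite -Er.
  exact: (len_desc Hj0 Hjn Ea' Yp Ha').
have c_ge : (j.-1 <= nat_of_ord (u p))%N by apply: ustab; rewrite Ep.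
have c_ne_jm1 : nat_of_ord (u p) != j.-1.
  apply/eqP => E; move/eqP: HB; apply; apply: val_inj => /=; by rewrite E -Ep.
have c_ne_j : nat_of_ord (u p) != j.
  apply/eqP => E.
  have Ebp : b = p.
    apply: (@perm_inj _ u); apply: val_inj; by rewrite Eb -E.
  have Ha : (j.-1 <= nat_of_ord a)%N.
    rewrite leqNgt; apply/negP => H.
    have H' : ((val a).+1 < j)%N by rewrite /=; (simpl in *; lia).
    have := ufix a H' => E2.
    by move: Ea; rewrite E2 => E3; move: H; rewrite E3 ltnn.
  move: Hab; rewrite Ebp Ep => Hai; (simpl in *; lia).
have Wp : w p = u p by rewrite Ew permM vfix //=; (simpl in *; lia).
split; last exact: (ndl_lem NDL Gj Ep Eq).
rewrite Wp; (simpl in *; lia).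
Qed.

Lemma sgen_comm n i j : (0 < i < n)%N -> (0 < j < n)%N -> i <> j -> i.+1 <> j -> j.+1 <> i ->
  sgen n i * sgen n j = sgen n j * sgen n i.
Proof.
move=> /andP [Hi0 Hin] /andP [Hj0 Hjn] H1 H2 H3.
apply/permP => x; apply: val_inj; rewrite !permM !sgenE Hin Hjn /sv.
move: (\val x) => t.
case: (eqVneq t i.-1) => ? /=; case: (eqVneq t i) => ? /=;
case: (eqVneq t j.-1) => ? /=; case: (eqVneq t j) => ? /=; eqc.
Qed.

Unset Implicit Arguments.

Theorem corollary5p6 (n : nat) (w : {perm 'I_n}) (i j : nat) :
  right_almost_reducible w i -> left_almost_reducible w j ->
  i <> j /\ sgen n i * sgen n j = sgen n j * sgen n i.
Proof.
move=> [_ HR] [_ HL].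
have [[Hi0 Hin] Hr] := right_side HR.
have [[Hj0 Hjn] Hl] := left_side HL.
have Hi1 : (i.-1 < n)%N by lia.
have Hj1 : (j.-1 < n)%N by lia.
have C1 : i <> j.
  move=> E; subst j.
  have [A1 A2] := Hr (Ordinal Hi1) (Ordinal Hin) erefl erefl.
  have [B1 B2] := Hl (Ordinal Hi1) (Ordinal Hin) erefl erefl.
  simpl in *; lia.
have C2 : i.+1 <> j.
  move=> E; subst j.
  have [A1 A2] := Hr (Ordinal Hi1) (Ordinal Hin) erefl erefl.
  have [B1 B2] := Hl (Ordinal Hin) (Ordinal Hjn) erefl erefl.
  simpl in *; lia.
have C3 : j.+1 <> i.
  move=> E; subst i.
  have [A1 A2] := Hr (Ordinal Hjn) (Ordinal Hin) erefl erefl.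
  have [B1 B2] := Hl (Ordinal Hj1) (Ordinal Hjn) erefl erefl.
  simpl in *; lia.
split => //; apply: sgen_comm => //; apply/andP; split => //.
Qed.
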